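(* Let $F\colon\mathcal C\to\mathcal D$ be a pseudofunctor between $2$-categories such that the map $\mathrm{Ob}(\mathcal C)\to\mathrm{Ob}(\mathcal D)$ induced by $F$ is a bijection. For every $2$-category $\mathcal E$ let $\Phi_{\mathcal E}\colon \mathrm{PsFun}(\mathcal D,\mathcal E)\to\mathrm{PsFun}(\mathcal C,\mathcal E)$ be the $2$-functor given by precomposition with $F$. If $F$ is pseudofull, then $\Phi_{\mathcal E}$ is $2$-faithful for every $2$-category $\mathcal E$.
   Context: $\mathrm{PsFun}(\mathcal C,\mathcal E)$ denotes the $2$-category of pseudofunctors $\mathcal C\to\mathcal E$, pseudonatural transformations and modifications. A pseudofunctor $F$ is pseudofull if each functor on hom-categories $F_{XY}\colon\mathcal C(X,Y)\to\mathcal D(FX,FY)$ is essentially surjective. A pseudofunctor (or $2$-functor) is $2$-faithful if each functor on hom-categories is fully faithful and injective on objects. *)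

(* Defs.v *)
From Stdlib Require Import ProofIrrelevance.
Set Implicit Arguments.
Unset Strict Implicit.

Record PreTwoCat : Type := {
  ob : Type;
  hom : ob -> ob -> Type;
  cell : forall x y : ob, hom x y -> hom x y -> Type;
  id1 : forall x : ob, hom x x;
  (* comp1 g f = g o f *)
  comp1 : forall x y z : ob, hom y z -> hom x y -> hom x z;
  id2 : forall (x y : ob) (f : hom x y), cell f f;
  (* vcomp b a = b . a  (first a, then b) *)
  vcomp : forall (x y : ob) (f g h : hom x y),
      cell g h -> cell f g -> cell f h;
  hcomp : forall (x y z : ob) (f f' : hom y z) (g g' : hom x y),
      cell f f' -> cell g g' -> cell (comp1 f g) (comp1 f' g') }.

Arguments hom : clear implicits.
Arguments id1 {p} x.

Definition ecell (C : PreTwoCat) (x y : ob C) (f g : hom C x y) (p : f = g)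
  : cell f g :=
  match p in _ = g' return cell f g' with eq_refl => id2 f end.

Record TwoCatLaws (C : PreTwoCat) : Prop := {
  t_vid_l : forall x y (f g : hom C x y) (a : cell f g), vcomp (id2 g) a = a;
  t_vid_r : forall x y (f g : hom C x y) (a : cell f g), vcomp a (id2 f) = a;
  t_vassoc : forall x y (f g h k : hom C x y)
      (a : cell f g) (b : cell g h) (c : cell h k),
      vcomp c (vcomp b a) = vcomp (vcomp c b) a;
  t_hid : forall x y z (f : hom C y z) (g : hom C x y),
      hcomp (id2 f) (id2 g) = id2 (comp1 f g);
  t_interchange : forall x y z (f f' f'' : hom C y z) (g g' g'' : hom C x y)
      (b : cell f f') (b' : cell f' f'') (a : cell g g') (a' : cell g' g''),
      hcomp (vcomp b' b) (vcomp a' a) = vcomp (hcomp b' a') (hcomp b a);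
  t_id1_l : forall x y (f : hom C x y), comp1 (id1 y) f = f;
  t_id1_r : forall x y (f : hom C x y), comp1 f (id1 x) = f;
  t_assoc : forall w x y z (f : hom C w x) (g : hom C x y) (h : hom C y z),
      comp1 h (comp1 g f) = comp1 (comp1 h g) f;
  t_hid_l : forall x y (f f' : hom C x y) (a : cell f f'),
      vcomp (ecell (t_id1_l f')) (hcomp (id2 (id1 y)) a)
      = vcomp a (ecell (t_id1_l f));
  t_hid_r : forall x y (f f' : hom C x y) (a : cell f f'),
      vcomp (ecell (t_id1_r f')) (hcomp a (id2 (id1 x)))
      = vcomp a (ecell (t_id1_r f));
  t_hassoc : forall w x y z (f f' : hom C w x) (g g' : hom C x y)
      (h h' : hom C y z) (a : cell f f') (b : cell g g') (c : cell h h'),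
      vcomp (ecell (t_assoc f' g' h')) (hcomp c (hcomp b a))
      = vcomp (hcomp (hcomp c b) a) (ecell (t_assoc f g h)) }.

Record TwoCat : Type := { tc :> PreTwoCat; tc_laws : TwoCatLaws tc }.

Definition c_id1_l (C : TwoCat) := t_id1_l (tc_laws C).
Definition c_id1_r (C : TwoCat) := t_id1_r (tc_laws C).
Definition c_assoc (C : TwoCat) := t_assoc (tc_laws C).
Arguments c_id1_l C {x y} f.
Arguments c_id1_r C {x y} f.
Arguments c_assoc C {w x y z} f g h.

Definition is_iso (C : PreTwoCat) (x y : ob C) (f g : hom C x y)
  (a : cell f g) : Prop :=
  exists b : cell g f, vcomp b a = id2 f /\ vcomp a b = id2 g.

Record PFdata (C D : PreTwoCat) : Type := {
  pf0 : ob C -> ob D;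
  pf1 : forall x y : ob C, hom C x y -> hom D (pf0 x) (pf0 y);
  pf2 : forall (x y : ob C) (f g : hom C x y),
      cell f g -> cell (pf1 f) (pf1 g);
  pphi : forall (x y z : ob C) (f : hom C x y) (g : hom C y z),
      cell (comp1 (pf1 g) (pf1 f)) (pf1 (comp1 g f));
  piota : forall x : ob C, cell (id1 (pf0 x)) (pf1 (id1 x)) }.

Record PFLaws (C D : TwoCat) (F : PFdata C D) : Prop := {
  pf2_id : forall x y (f : hom C x y), pf2 F (id2 f) = id2 (pf1 F f);
  pf2_comp : forall x y (f g h : hom C x y) (a : cell f g) (b : cell g h),
      pf2 F (vcomp b a) = vcomp (pf2 F b) (pf2 F a);
  pphi_iso : forall x y z (f : hom C x y) (g : hom C y z),
      is_iso (pphi F f g);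
  piota_iso : forall x, is_iso (piota F x);
  pphi_nat : forall x y z (f f' : hom C x y) (g g' : hom C y z)
      (a : cell f f') (b : cell g g'),
      vcomp (pf2 F (hcomp b a)) (pphi F f g)
      = vcomp (pphi F f' g') (hcomp (pf2 F b) (pf2 F a));
  pphi_assoc : forall w x y z (f : hom C w x) (g : hom C x y) (h : hom C y z),
      vcomp (ecell (f_equal (@pf1 _ _ F w z) (c_assoc C f g h)))
        (vcomp (pphi F (comp1 g f) h) (hcomp (id2 (pf1 F h)) (pphi F f g)))
      = vcomp (vcomp (pphi F f (comp1 h g)) (hcomp (pphi F g h) (id2 (pf1 F f))))
          (ecell (c_assoc D (pf1 F f) (pf1 F g) (pf1 F h)));
  pphi_unit_l : forall x y (f : hom C x y),
      vcomp (ecell (f_equal (@pf1 _ _ F x y) (c_id1_l C f)))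
        (vcomp (pphi F f (id1 y)) (hcomp (piota F y) (id2 (pf1 F f))))
      = ecell (c_id1_l D (pf1 F f));
  pphi_unit_r : forall x y (f : hom C x y),
      vcomp (ecell (f_equal (@pf1 _ _ F x y) (c_id1_r C f)))
        (vcomp (pphi F (id1 x) f) (hcomp (id2 (pf1 F f)) (piota F x)))
      = ecell (c_id1_r D (pf1 F f)) }.

Record PseudoFunctor (C D : TwoCat) : Type :=
  { pf :> PFdata C D; pf_laws : PFLaws pf }.

Definition compPF (C D E : PreTwoCat) (F : PFdata C D) (G : PFdata D E)
  : PFdata C E :=
  {| pf0 := fun x => pf0 G (pf0 F x);
     pf1 := fun x y f => pf1 G (pf1 F f);
     pf2 := fun x y f g a => pf2 G (pf2 F a);
     pphi := fun x y z f g =>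
       vcomp (pf2 G (pphi F f g)) (pphi G (pf1 F f) (pf1 F g));
     piota := fun x => vcomp (pf2 G (piota F x)) (piota G (pf0 F x)) |}.

Record PNdata (D E : PreTwoCat) (G H : PFdata D E) : Type := {
  pcomp : forall x : ob D, hom E (pf0 G x) (pf0 H x);
  pnat : forall (x y : ob D) (f : hom D x y),
      cell (comp1 (pf1 H f) (pcomp x)) (comp1 (pcomp y) (pf1 G f)) }.

Record PNLaws (D : PreTwoCat) (E : TwoCat) (G H : PFdata D E)
  (a : PNdata G H) : Prop := {
  pn_iso : forall x y (f : hom D x y), is_iso (pnat a f);
  pn_2nat : forall x y (f f' : hom D x y) (b : cell f f'),
      vcomp (hcomp (id2 (pcomp a y)) (pf2 G b)) (pnat a f)
      = vcomp (pnat a f') (hcomp (pf2 H b) (id2 (pcomp a x)));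
  pn_comp : forall x y z (f : hom D x y) (g : hom D y z),
      vcomp (pnat a (comp1 g f)) (hcomp (pphi H f g) (id2 (pcomp a x)))
      = vcomp (hcomp (id2 (pcomp a z)) (pphi G f g))
        (vcomp (ecell (eq_sym (c_assoc E (pf1 G f) (pf1 G g) (pcomp a z))))
        (vcomp (hcomp (pnat a g) (id2 (pf1 G f)))
        (vcomp (ecell (c_assoc E (pf1 G f) (pcomp a y) (pf1 H g)))
        (vcomp (hcomp (id2 (pf1 H g)) (pnat a f))
               (ecell (eq_sym (c_assoc E (pcomp a x) (pf1 H f) (pf1 H g))))))));
  pn_unit : forall x,
      vcomp (pnat a (id1 x)) (hcomp (piota H x) (id2 (pcomp a x)))
      = vcomp (hcomp (id2 (pcomp a x)) (piota G x))
          (vcomp (ecell (eq_sym (c_id1_r E (pcomp a x))))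
                 (ecell (c_id1_l E (pcomp a x)))) }.

Record PseudoNat (D : PreTwoCat) (E : TwoCat) (G H : PFdata D E) : Type :=
  { pn :> PNdata G H; pn_laws : PNLaws pn }.

Record Modif (D E : PreTwoCat) (G H : PFdata D E) (a b : PNdata G H) : Type := {
  mcomp : forall x : ob D, cell (pcomp a x) (pcomp b x);
  mlaw : forall (x y : ob D) (f : hom D x y),
      vcomp (pnat b f) (hcomp (id2 (pf1 H f)) (mcomp x))
      = vcomp (hcomp (mcomp y) (id2 (pf1 G f))) (pnat a f) }.

(** * Precomposition with F : the action of Phi_E on hom-categories *)

Definition whiskerPNdata (C D E : PreTwoCat) (F : PFdata C D)
  (G H : PFdata D E) (a : PNdata G H) : PNdata (compPF F G) (compPF F H) :=
  @Build_PNdata C E (compPF F G) (compPF F H)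
    (fun x => pcomp a (pf0 F x)) (fun x y f => pnat a (pf1 F f)).

Definition whiskerM (C D E : PreTwoCat) (F : PFdata C D)
  (G H : PFdata D E) (a b : PNdata G H) (m : Modif a b)
  : Modif (whiskerPNdata F a) (whiskerPNdata F b) :=
  @Build_Modif C E (compPF F G) (compPF F H)
    (whiskerPNdata F a) (whiskerPNdata F b)
    (fun x => mcomp m (pf0 F x)) (fun x y f => mlaw m (pf1 F f)).

Section Whisker.
Variables (E : TwoCat).

Lemma hcomp_vcomp_id_r (x y z : ob E) (f f' f'' : hom E y z) (g : hom E x y)
  (b : cell f f') (b' : cell f' f'') :
  hcomp (vcomp b' b) (id2 g) = vcomp (hcomp b' (id2 g)) (hcomp b (id2 g)).
Proof.
  rewrite <- (t_interchange (tc_laws E)). now rewrite (t_vid_l (tc_laws E)).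
Qed.

Lemma hcomp_vcomp_id_l (x y z : ob E) (f : hom E y z) (g g' g'' : hom E x y)
  (a : cell g g') (a' : cell g' g'') :
  hcomp (id2 f) (vcomp a' a) = vcomp (hcomp (id2 f) a') (hcomp (id2 f) a).
Proof.
  rewrite <- (t_interchange (tc_laws E)). now rewrite (t_vid_l (tc_laws E)).
Qed.

Lemma whisker_laws (C D : PreTwoCat) (F : PFdata C D) (G H : PFdata D E)
  (a : PseudoNat G H) : PNLaws (whiskerPNdata F a).
Proof.
  destruct a as [a La]. destruct La as [Li L2 Lc Lu].
  constructor; simpl.
  - intros x y f; apply Li.
  - intros x y f f' b; apply L2.
  - intros x y z f g.
    rewrite hcomp_vcomp_id_r, hcomp_vcomp_id_l.
    rewrite (t_vassoc (tc_laws E)), <- L2, <- (t_vassoc (tc_laws E)), Lc.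
    now rewrite !(t_vassoc (tc_laws E)).
  - intros x.
    rewrite hcomp_vcomp_id_r, hcomp_vcomp_id_l.
    rewrite (t_vassoc (tc_laws E)), <- L2, <- (t_vassoc (tc_laws E)), Lu.
    now rewrite !(t_vassoc (tc_laws E)).
Qed.

End Whisker.

Definition whiskerPN (C D : PreTwoCat) (E : TwoCat) (F : PFdata C D)
  (G H : PFdata D E) (a : PseudoNat G H)
  : PseudoNat (compPF F G) (compPF F H) :=
  {| pn := whiskerPNdata F a; pn_laws := whisker_laws F a |}.

Definition ob_bijective (C D : PreTwoCat) (F : PFdata C D) : Prop :=
  (forall x x' : ob C, pf0 F x = pf0 F x' -> x = x') /\
  (forall d : ob D, exists x : ob C, pf0 F x = d).

Definition pseudofull (C D : PreTwoCat) (F : PFdata C D) : Prop :=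
  forall (x y : ob C) (g : hom D (pf0 F x) (pf0 F y)),
    exists (f : hom C x y) (a : cell (pf1 F f) g), is_iso a.

(** Phi_E = (- o F) : PsFun(D,E) -> PsFun(C,E) is 2-faithful, i.e. for all
    pseudofunctors G H : D -> E the functor
    PsFun(D,E)(G,H) -> PsFun(C,E)(GF,HF) is injective on objects and
    fully faithful. *)
Definition precomp_two_faithful (C D E : TwoCat) (F : PFdata C D) : Prop :=
  forall G H : PseudoFunctor D E,
    (forall a b : PseudoNat G H, whiskerPN F a = whiskerPN F b -> a = b) /\
    (forall (a b : PseudoNat G H) (m n : Modif a b),
        whiskerM F m = whiskerM F n -> m = n) /\
    (forall (a b : PseudoNat G H)
            (mu : Modif (whiskerPN F a) (whiskerPN F b)),
        exists m : Modif a b, whiskerM F m = mu).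

(* Main.v *)
Require Import Defs.
From Stdlib Require Import ProofIrrelevance FunctionalExtensionality ClassicalEpsilon.

Section Gen.
Variable E : TwoCat.

Lemma rcancel (x y : ob E) (f g h : hom E x y) (u v : cell g h) (i : cell f g)
  (j : cell g f) : vcomp i j = id2 g -> vcomp u i = vcomp v i -> u = v.
Proof.
  intros Hij Huv.
  rewrite <- (t_vid_r (tc_laws E) u), <- (t_vid_r (tc_laws E) v), <- Hij.
  rewrite !(t_vassoc (tc_laws E)), Huv. reflexivity.
Qed.

Lemma whisk_inv (D : TwoCat) (G : PseudoFunctor D E) (x y : ob D)
  (f g : hom D x y) (al : cell f g) (be : cell g f) (z : ob E)
  (k : hom E z (pf0 G x)) :
  vcomp al be = id2 g ->
  vcomp (hcomp (pf2 G al) (id2 k)) (hcomp (pf2 G be) (id2 k)) = id2 _.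
Proof.
  intros H.
  rewrite <- (t_interchange (tc_laws E)), (t_vid_l (tc_laws E)).
  rewrite <- (pf2_comp (pf_laws G)), H, (pf2_id (pf_laws G)).
  apply (t_hid (tc_laws E)).
Qed.
End Gen.

Definition Tc (C D E : PreTwoCat) (F : PFdata C D) (G H : PFdata D E)
  (a b : PNdata G H) (mu : Modif (whiskerPNdata F a) (whiskerPNdata F b))
  (c : ob C) (d : ob D) (p : pf0 F c = d) : cell (pcomp a d) (pcomp b d) :=
  match p in _ = d' return cell (pcomp a d') (pcomp b d') with
  | eq_refl => mcomp mu c end.
Arguments Tc {C D E F G H a b} mu {c d} p.

Lemma Tc_indep (C D E : PreTwoCat) (F : PFdata C D) (G H : PFdata D E)
  (a b : PNdata G H) (mu : Modif (whiskerPNdata F a) (whiskerPNdata F b))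
  (Finj : forall x x' : ob C, pf0 F x = pf0 F x' -> x = x')
  (c1 c2 : ob C) (d : ob D) (p1 : pf0 F c1 = d) (p2 : pf0 F c2 = d) :
  Tc mu p1 = Tc mu p2.
Proof.
  assert (c1 = c2) by (apply Finj; now rewrite p1, p2).
  subst c2. assert (p1 = p2) by apply proof_irrelevance. now subst.
Qed.
Arguments Tc_indep {C D E F G H a b} mu Finj {c1 c2 d} p1 p2.

Theorem mainTheorem3 (C D : TwoCat) (F : PseudoFunctor C D) :
  ob_bijective F -> pseudofull F ->
  forall E : TwoCat, precomp_two_faithful E F.
Proof.
  intros [Finj Fsurj] Hfull E G H. split; [|split].
  - intros [a La] [b Lb] Heq.
    apply (f_equal (@pn _ _ _ _)) in Heq; simpl in Heq.
    destruct a as [pa na], b as [pb nb].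
    unfold whiskerPNdata in Heq. injection Heq as Hp Hn.
    assert (pa = pb).
    { apply functional_extensionality_dep; intro d.
      destruct (Fsurj d) as [c <-]. exact (f_equal (fun h => h c) Hp). }
    subst pb. apply inj_pair2 in Hn.
    assert (na = nb).
    { apply functional_extensionality_dep; intro x.
      apply functional_extensionality_dep; intro y.
      apply functional_extensionality_dep; intro g.
      destruct (Fsurj x) as [cx Hx]; subst x.
      destruct (Fsurj y) as [cy Hy]; subst y.
      destruct (Hfull cx cy g) as [f0 [al [be [Hba Hab]]]].
      eapply rcancel with (i := hcomp (pf2 H al) (id2 (pa (pf0 F cx))))
                     (j := hcomp (pf2 H be) (id2 (pa (pf0 F cx)))).
      + apply whisk_inv; exact Hab.
      + pose proof (pn_2nat La al) as E1; simpl in E1.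
        pose proof (pn_2nat Lb al) as E2; simpl in E2.
        rewrite <- E1, <- E2. f_equal.
        exact (f_equal (fun h => h cx cy f0) Hn). }
    subst nb. f_equal. apply proof_irrelevance.
  - intros a b [m Lm] [n Ln] Heq.
    apply (f_equal (@mcomp _ _ _ _ _ _)) in Heq; simpl in Heq.
    assert (m = n).
    { apply functional_extensionality_dep; intro d.
      destruct (Fsurj d) as [c <-]. exact (f_equal (fun h => h c) Heq). }
    subst n. f_equal. apply proof_irrelevance.
  - intros a b mu.
    pose (ch := fun d => constructive_indefinite_description _ (Fsurj d)).
    pose (m0 := fun d => Tc mu (proj2_sig (ch d))).
    assert (Hm0 : forall c, m0 (pf0 F c) = mcomp mu c).
    { intro c. unfold m0. apply (Tc_indep mu Finj _ eq_refl). }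
    clearbody m0.
    assert (Hlaw : forall (x y : ob D) (f : hom D x y),
      vcomp (pnat b f) (hcomp (id2 (pf1 H f)) (m0 x))
      = vcomp (hcomp (m0 y) (id2 (pf1 G f))) (pnat a f)).
    { intros x y f.
      destruct (Fsurj x) as [cx Hx]; subst x.
      destruct (Fsurj y) as [cy Hy]; subst y.
      rewrite !Hm0.
      destruct (Hfull cx cy f) as [f0 [al [be [Hba Hab]]]].
      pose proof (mlaw mu f0) as M; simpl in M.
      pose proof (pn_2nat (pn_laws a) al) as Na; simpl in Na.
      pose proof (pn_2nat (pn_laws b) al) as Nb; simpl in Nb.
      eapply rcancel with (i := hcomp (pf2 H al) (id2 (pcomp a (pf0 F cx))))
                     (j := hcomp (pf2 H be) (id2 (pcomp a (pf0 F cx)))).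
      { apply whisk_inv; exact Hab. }
      assert (E1 : vcomp (hcomp (id2 (pf1 H f)) (mcomp mu cx))
                      (hcomp (pf2 H al) (id2 (pcomp a (pf0 F cx))))
                 = vcomp (hcomp (pf2 H al) (id2 (pcomp b (pf0 F cx))))
                      (hcomp (id2 (pf1 H (pf1 F f0))) (mcomp mu cx))).
      { rewrite <- !(t_interchange (tc_laws E)), !(t_vid_l (tc_laws E)),
          !(t_vid_r (tc_laws E)). reflexivity. }
      assert (E2 : vcomp (hcomp (id2 (pcomp b (pf0 F cy))) (pf2 G al))
                      (hcomp (mcomp mu cy) (id2 (pf1 G (pf1 F f0))))
                 = vcomp (hcomp (mcomp mu cy) (id2 (pf1 G f)))
                      (hcomp (id2 (pcomp a (pf0 F cy))) (pf2 G al))).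
      { rewrite <- !(t_interchange (tc_laws E)), !(t_vid_l (tc_laws E)),
          !(t_vid_r (tc_laws E)). reflexivity. }
      cbn in *.
      rewrite <- (t_vassoc (tc_laws E)), E1, (t_vassoc (tc_laws E)), <- Nb.
      rewrite <- (t_vassoc (tc_laws E)), M, (t_vassoc (tc_laws E)), E2.
      rewrite <- (t_vassoc (tc_laws E)), Na, (t_vassoc (tc_laws E)).
      reflexivity. }
    exists {| mcomp := m0; mlaw := Hlaw |}.
    destruct mu as [muc mul]. unfold whiskerM. simpl in Hm0.
    assert (Hf : (fun x => m0 (pf0 F x)) = muc)
      by (apply functional_extensionality_dep; exact Hm0).
    subst muc. f_equal. apply proof_irrelevance.
Qed.
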